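(* Let $(T_0,\widetilde T_0)$ be a joint pair of closed abstract Friedrichs operators on a complex Hilbert space $\mathcal{H}$, with $T_1:=\widetilde T_0^*$, $\widetilde T_1:=T_0^*$, $\mathcal{W}_0:=\operatorname{dom}T_0=\operatorname{dom}\widetilde T_0$ and $\mathcal{W}:=\operatorname{dom}T_1=\operatorname{dom}\widetilde T_1$. Define on $\mathcal{W}$ the sesquilinear form $[u\mid v]:=\langle T_1u,v\rangle-\langle u,\widetilde T_1 v\rangle$, and for $S\subseteq\mathcal{W}$ let $S^{[\perp]}:=\{u\in\mathcal{W}: [u\mid v]=0 \text{ for all } v\in S\}$. Then $$\bigl(\mathcal{W}_0\dotplus\operatorname{ker}T_1\dotplus\operatorname{ker}\widetilde T_1\bigr)^{[\perp][\perp]}=\mathcal{W}.$$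
   Context: $\mathcal{H}$ is a complex Hilbert space with inner product $\langle\cdot,\cdot\rangle$ (linear in the first argument) and norm $\|\cdot\|$. A pair $(T,\widetilde T)$ of densely defined linear operators on $\mathcal{H}$ is a joint pair of abstract Friedrichs operators if: (T1) $T$ and $\widetilde T$ have a common dense domain $\mathcal{D}$ and $\langle T\varphi,\psi\rangle=\langle\varphi,\widetilde T\psi\rangle$ for all $\varphi,\psi\in\mathcal{D}$; (T2) there is $c>0$ with $\|(T+\widetilde T)\varphi\|\le c\|\varphi\|$ for all $\varphi\in\mathcal{D}$; (T3) there is $\mu_0>0$ with $\langle (T+\widetilde T)\varphi,\varphi\rangle\ge 2\mu_0\|\varphi\|^2$ for all $\varphi\in\mathcal{D}$. A joint pair of closed abstract Friedrichs operators is such a pair $(T_0,\widetilde T_0)$ in which both operators are closed. One has $T_0\subseteq T_1$, $\widetilde T_0\subseteq\widetilde T_1$, $\operatorname{dom}T_1=\operatorname{dom}\widetilde T_1$, and the sum $\mathcal{W}_0+\operatorname{ker}T_1+\operatorname{ker}\widetilde T_1$ is direct. *)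

(* Defs.v *)
From HB Require Import structures.
From mathcomp Require Import all_boot all_order all_algebra.
From mathcomp Require Import complex.
From mathcomp Require Import boolp classical_sets reals.
Set Implicit Arguments. Unset Strict Implicit. Unset Printing Implicit Defensive.
Import Order.TTheory GRing.Theory Num.Theory.
Local Open Scope ring_scope.
Local Open Scope classical_set_scope.

Section Hilbert.
Variables (R : realType) (V : lmodType R[i]) (ip : V -> V -> R[i]).

Definition hnorm (x : V) : R := Num.sqrt (complex.Re (ip x x)).

Definition hcvg (u : nat -> V) (x : V) : Prop :=
  forall e : R, 0 < e -> exists N : nat, forall n, (N <= n)%N -> hnorm (u n - x) < e.

Definition hcauchy (u : nat -> V) : Prop :=
  forall e : R, 0 < e -> exists N : nat, forall m n, (N <= m)%N -> (N <= n)%N ->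
    hnorm (u m - u n) < e.

Definition is_hilbert : Prop :=
  [/\ (forall (a : R[i]) (x y z : V), ip (a *: x + y) z = a * ip x z + ip y z),
      (forall x y : V, ip y x = (ip x y)^*),
      (forall x : V, 0 <= ip x x),
      (forall x : V, ip x x = 0 -> x = 0)
    & (forall u : nat -> V, hcauchy u -> exists x, hcvg u x)].

End Hilbert.

Record op (R : realType) (V : lmodType R[i]) := Op { dom : set V; app : V -> V }.
Arguments Op {R V}.

Section Operators.
Variables (R : realType) (V : lmodType R[i]) (ip : V -> V -> R[i]).

Definition is_linop (T : op V) : Prop :=
  [/\ dom T 0,
      (forall (a : R[i]) x y, dom T x -> dom T y -> dom T (a *: x + y))
    & (forall (a : R[i]) x y, dom T x -> dom T y ->
         app T (a *: x + y) = a *: app T x + app T y)].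

Definition dense (S : set V) : Prop :=
  forall (x : V) (e : R), 0 < e -> exists2 u, S u & hnorm ip (x - u) < e.

Definition densely_defined (T : op V) : Prop := is_linop T /\ dense (dom T).

Definition closed_op (T : op V) : Prop :=
  forall (u : nat -> V) (x y : V), (forall n, dom T (u n)) ->
    hcvg ip u x -> hcvg ip (fun n => app T (u n)) y -> dom T x /\ app T x = y.

Definition is_adjoint (S T : op V) : Prop :=
  (dom S = [set v | exists w, forall u, dom T u -> ip (app T u) v = ip u w]) /\
  (forall v u, dom S v -> dom T u -> ip (app T u) v = ip u (app S v)).

Definition joint_friedrichs (T Tt : op V) : Prop :=
  [/\ densely_defined T /\ densely_defined Tt, dom T = dom Tt,
      (forall phi psi, dom T phi -> dom T psi ->
         ip (app T phi) psi = ip phi (app Tt psi)),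
      (exists2 c : R, 0 < c & forall phi, dom T phi ->
         hnorm ip (app T phi + app Tt phi) <= c * hnorm ip phi)
    & (exists2 mu0 : R, 0 < mu0 & forall phi, dom T phi ->
         (Complex (2 * mu0 * hnorm ip phi ^+ 2) 0 : R[i]) <= ip (app T phi + app Tt phi) phi)].

Definition joint_closed_friedrichs (T Tt : op V) : Prop :=
  [/\ joint_friedrichs T Tt, closed_op T & closed_op Tt].

Definition ker (T : op V) : set V := [set u | dom T u /\ app T u = 0].

Definition sum3 (A B C : set V) : set V :=
  [set x | exists a b c, [/\ A a, B b, C c & x = a + b + c]].

Definition bform (T1 Tt1 : op V) (u v : V) : R[i] :=
  ip (app T1 u) v - ip u (app Tt1 v).

Definition bperp (T1 Tt1 : op V) (S : set V) : set V :=
  [set u | dom T1 u /\ forall v, S v -> bform T1 Tt1 u v = 0].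

End Operators.

(* Main.v *)
Require Import Defs.
From HB Require Import structures.
From mathcomp Require Import all_boot all_order all_algebra.
From mathcomp Require Import complex.
From mathcomp Require Import boolp classical_sets reals.
From mathcomp Require Import ring lra.
Import Order.TTheory GRing.Theory Num.Theory.
Local Open Scope ring_scope.
Local Open Scope classical_set_scope.
Set Implicit Arguments. Unset Strict Implicit.

Section Cx.
Variable R : realType.
Lemma cext (z w : R[i]) : complex.Re z = complex.Re w -> complex.Im z = complex.Im w -> z = w.
Proof. by case: z => a b; case: w => c d /= -> ->. Qed.
Lemma ReD (z w : R[i]) : complex.Re (z + w) = complex.Re z + complex.Re w.
Proof. by case: z => a b; case: w. Qed.
Lemma ImD (z w : R[i]) : complex.Im (z + w) = complex.Im z + complex.Im w.
Proof. by case: z => a b; case: w. Qed.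
Lemma ReN (z : R[i]) : complex.Re (- z) = - complex.Re z.
Proof. by case: z. Qed.
Lemma ImN (z : R[i]) : complex.Im (- z) = - complex.Im z.
Proof. by case: z. Qed.
Lemma ReB (z w : R[i]) : complex.Re (z - w) = complex.Re z - complex.Re w.
Proof. by rewrite ReD ReN. Qed.
Lemma ReM (z w : R[i]) : complex.Re (z * w) = complex.Re z * complex.Re w - complex.Im z * complex.Im w.
Proof. by case: z => a b; case: w. Qed.
Lemma ImM (z w : R[i]) : complex.Im (z * w) = complex.Re z * complex.Im w + complex.Im z * complex.Re w.
Proof. by case: z => a b; case: w. Qed.
Lemma ReJ (z : R[i]) : complex.Re (Num.conj z) = complex.Re z.
Proof. by case: z. Qed.
Lemma ImJ (z : R[i]) : complex.Im (Num.conj z) = - complex.Im z.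
Proof. by case: z. Qed.
Lemma JD (z w : R[i]) : Num.conj (z + w) = Num.conj z + Num.conj w.
Proof. by case: z => a b; case: w => c d; apply: cext => //=; rewrite opprD. Qed.
Lemma JN (z : R[i]) : Num.conj (- z) = - Num.conj z.
Proof. by case: z. Qed.
Lemma J0 : Num.conj (0 : R[i]) = 0.
Proof. by apply: cext => //=; rewrite oppr0. Qed.
Lemma JM (z w : R[i]) : Num.conj (z * w) = Num.conj z * Num.conj w.
Proof. by case: z => a b; case: w => c d; apply: cext => /=; lra. Qed.
Lemma Re0 : complex.Re (0 : R[i]) = 0. Proof. by []. Qed.
Lemma Im0 : complex.Im (0 : R[i]) = 0. Proof. by []. Qed.
Lemma ge0_Re (z : R[i]) : 0 <= z -> 0 <= complex.Re z /\ complex.Im z = 0.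
Proof. rewrite lecE => /andP[/eqP -> ->]; done. Qed.
End Cx.

Section Reals.
Variable R : realType.

Lemma le0_eps (x K : R) : (forall e, 0 < e -> x <= e * K) -> x <= 0.
Proof.
move=> h; have [K0|Kp] := lerP K 0.
  by have := h 1 ltr01; lra.
rewrite leNgt; apply/negP => xp.
have := h (x / (2 * K)) (divr_gt0 xp (mulr_gt0 (ltr0Sn _ 1) Kp)).
have -> : x / (2 * K) * K = x / 2 by field; apply: lt0r_neq0.
lra.
Qed.

Lemma quad0 (a b : R) : 0 <= b -> (forall t, 0 <= 2 * t * a + t ^+ 2 * b) -> a = 0.
Proof.
move=> b0 h; apply/eqP; rewrite eq_le; apply/andP; split.
  apply: (le0_eps (K := b / 2)) => e ep; have := h (- e); rewrite sqrrN => h1.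
  have : e * (2 * a - e * b) <= 0.
    have -> : e * (2 * a - e * b) = - (2 * - e * a + e ^+ 2 * b) by ring.
    by rewrite oppr_le0.
  by rewrite pmulr_rle0 //; lra.
rewrite -oppr_le0; apply: (le0_eps (K := b / 2)) => e ep; have := h e => h1.
have : e * (- 2 * a - e * b) <= 0.
  have -> : e * (- 2 * a - e * b) = - (2 * e * a + e ^+ 2 * b) by ring.
  by rewrite oppr_le0.
by rewrite pmulr_rle0 //; lra.
Qed.

Definition inv1 (n : nat) : R := (n.+1%:R)^-1.
Lemma inv1_gt0 n : 0 < inv1 n.
Proof. by rewrite /inv1 invr_gt0 ltr0Sn. Qed.
Lemma small_inv (e : R) : 0 < e -> exists K : nat, forall n, (K <= n)%N -> inv1 n < e.
Proof.
move=> ep; rewrite /inv1; exists (Num.Def.archi_bound (e^-1)) => n hn.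
rewrite invf_plt ?posrE ?ltr0Sn ?invr_gt0 //.
have ei : 0 < e^-1 by rewrite invr_gt0.
have h1 := archi_boundP (ltW ei).
have h2 : (Num.Def.archi_bound e^-1)%:R <= n.+1%:R :> R by rewrite ler_nat ltnW // ltnS.
lra.
Qed.

End Reals.

Section RealC.
Variable R : realType.
Lemma coerR (Y H c mu : R) : 0 < mu -> 0 <= c -> 0 <= H -> 0 <= Y ->
  (forall e, 0 < e -> exists s, [/\ 0 <= s, Y <= s + e & 2 * mu * s ^+ 2 <= e * (H + c * s)]) ->
  Y = 0.
Proof.
move=> mup c0 H0 Y0 h.
apply/eqP; rewrite eq_le Y0 andbT leNgt; apply/negP => Yp.
pose a := Y / 2.
have aE : a = Y / 2 by [].
clearbody a.
have ap : 0 < a by rewrite aE; lra.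
pose K := H / a + c.
have K0 : 0 <= K by rewrite /K addr_ge0 // divr_ge0 // ltW.
have KE : K = H / a + c by [].
clearbody K.
pose e := Num.min a (mu * a / (K + 1)).
have ep : 0 < e.
  by rewrite /e lt_min ap /= divr_gt0 ?mulr_gt0 //; lra.
have ea : e <= a by rewrite /e ge_min lexx.
have eK : e * (K + 1) <= mu * a.
  have : e <= mu * a / (K + 1) by rewrite /e ge_min lexx orbT.
  by rewrite ler_pdivlMr //; lra.
clearbody e.
have [s [s0 hs hq]] := h e ep.
have sa : a <= s by lra.
have sp : 0 < s by lra.
have hH : H <= s * (H / a).
  have -> : s * (H / a) = H + H / a * (s - a) by field; lra.
  by rewrite lerDl mulr_ge0 ?divr_ge0 ?subr_ge0 // ltW.
have h2 : 2 * mu * s ^+ 2 <= e * s * K.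
  apply: le_trans hq _; rewrite KE.
  have : e * H <= e * (s * (H / a)) by rewrite ler_wpM2l // ltW.
  lra.
have h3 : 2 * mu * s <= e * K.
  have : s * (2 * mu * s - e * K) <= 0.
    have -> : s * (2 * mu * s - e * K) = 2 * mu * s ^+ 2 - e * s * K by ring.
    lra.
  by rewrite pmulr_rle0 //; lra.
have h4 : 2 * mu * a <= 2 * mu * s by rewrite ler_wpM2l // ?mulr_ge0 // ltW.
have h5 : mu * a > 0 by rewrite mulr_gt0.
nra.
Qed.
End RealC.

Section Hil.
Variables (R : realType) (V : lmodType R[i]) (ip : V -> V -> R[i]).
Hypothesis HH : is_hilbert ip.

Local Notation N x := (complex.Re (ip x x)).
Local Notation nm := (hnorm ip).


Lemma ip_lin a x y z : ip (a *: x + y) z = a * ip x z + ip y z.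
Proof. by case: HH. Qed.
Lemma ip_conj x y : ip y x = Num.conj (ip x y).
Proof. by case: HH. Qed.
Lemma ip_ge0 x : 0 <= ip x x.
Proof. by case: HH. Qed.
Lemma ip_eq0 x : ip x x = 0 -> x = 0.
Proof. by case: HH => _ _ _ h _; exact: h. Qed.

Lemma ipDl x y z : ip (x + y) z = ip x z + ip y z.
Proof. by rewrite -[x]scale1r ip_lin mul1r scale1r. Qed.
Lemma ip0l z : ip 0 z = 0.
Proof. by apply: (addrI (ip 0 z)); rewrite -ipDl !addr0. Qed.
Lemma ipZl a x z : ip (a *: x) z = a * ip x z.
Proof. by rewrite -[a *: x]addr0 ip_lin ip0l addr0. Qed.
Lemma ipNl x z : ip (- x) z = - ip x z.
Proof. by rewrite -scaleN1r ipZl mulN1r. Qed.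
Lemma ipBl x y z : ip (x - y) z = ip x z - ip y z.
Proof. by rewrite ipDl ipNl. Qed.
Lemma ipDr x y z : ip z (x + y) = ip z x + ip z y.
Proof. by rewrite ip_conj ipDl JD -!ip_conj. Qed.
Lemma ip0r z : ip z 0 = 0.
Proof. by rewrite ip_conj ip0l J0. Qed.
Lemma ipZr a x z : ip z (a *: x) = Num.conj a * ip z x.
Proof. by rewrite ip_conj ipZl JM -ip_conj. Qed.
Lemma ipNr x z : ip z (- x) = - ip z x.
Proof. by rewrite ip_conj ipNl JN -ip_conj. Qed.
Lemma ipBr x y z : ip z (x - y) = ip z x - ip z y.
Proof. by rewrite ipDr ipNr. Qed.

Lemma ReipC x y : complex.Re (ip y x) = complex.Re (ip x y).
Proof. by rewrite ip_conj ReJ. Qed.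

Lemma N_ge0 x : 0 <= N x.
Proof. by case: (ge0_Re (ip_ge0 x)). Qed.
Lemma N_eq0 x : N x = 0 -> x = 0.
Proof.
move=> h; apply: ip_eq0; case: (ge0_Re (ip_ge0 x)) => _ hi.
by apply: cext.
Qed.
Lemma nm_ge0 x : 0 <= nm x.
Proof. exact: sqrtr_ge0. Qed.
Lemma nm_sqr x : nm x ^+ 2 = N x.
Proof. by rewrite /hnorm sqr_sqrtr // N_ge0. Qed.
Lemma nm_eq0 x : nm x = 0 -> x = 0.
Proof. by move=> h; apply: N_eq0; rewrite -nm_sqr h expr0n. Qed.

Lemma N_add_real (t : R) x y :
  N (x + (t%:C)%C *: y) = N x + 2 * t * complex.Re (ip x y) + t ^+ 2 * N y.
Proof.
rewrite ipDl !ipDr !ipZl !ipZr !ReD !ReM !ReJ !ImJ /=.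
rewrite (ReipC x y).
have -> : complex.Im (ip y y) = 0 by case: (ge0_Re (ip_ge0 y)).
lra.
Qed.

Lemma N_add x y : N (x + y) = N x + 2 * complex.Re (ip x y) + N y.
Proof.
have := N_add_real 1 x y. by rewrite scale1r expr1n mul1r mulr1.
Qed.

Lemma CS2 x y : complex.Re (ip x y) ^+ 2 <= N x * N y.
Proof.
have [y0|ny] := eqVneq y 0.
  by rewrite y0 ip0r expr0n /= mulr_ge0 // N_ge0.
have qp : 0 < N y.
  rewrite lt_def N_ge0 andbT; apply/eqP => h; move/eqP: ny; apply; exact: N_eq0 h.
set a := complex.Re (ip x y).
have := N_ge0 (x + ((- a / N y)%:C)%C *: y).
rewrite N_add_real => h.
have e : N x + 2 * (- a / N y) * a + (- a / N y) ^+ 2 * N y = N x - a ^+ 2 / N y.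
  by field; apply: lt0r_neq0.
by rewrite e subr_ge0 ler_pdivrMr // in h.
Qed.

Lemma CS x y : `| complex.Re (ip x y) | <= nm x * nm y.
Proof.
rewrite -sqrtr_sqr /hnorm -sqrtrM ?N_ge0 //.
by rewrite ler_sqrt ?mulr_ge0 ?N_ge0 // CS2.
Qed.
Lemma CSr x y : complex.Re (ip x y) <= nm x * nm y.
Proof. exact: le_trans (ler_norm _) (CS x y). Qed.

Lemma nm_triangle x y : nm (x + y) <= nm x + nm y.
Proof.
rewrite -(ler_pXn2r (n:=2)) ?nnegrE ?addr_ge0 ?nm_ge0 //.
rewrite nm_sqr N_add sqrrD !nm_sqr.
have := CSr x y. lra.
Qed.

Lemma N0 : N 0 = 0.
Proof. by rewrite ip0l. Qed.
Lemma N_scale (t : R) w : N ((t%:C)%C *: w) = t ^+ 2 * N w.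
Proof. by have := N_add_real t 0 w; rewrite add0r N0 ip0l /= ; lra. Qed.
Lemma N_opp w : N (- w) = N w.
Proof. by rewrite ipNl ipNr opprK. Qed.
Lemma parallelogram a b : N (a - b) + N (a + b) = 2 * N a + 2 * N b.
Proof. rewrite !N_add ipNr ReN N_opp; lra. Qed.
Lemma nm_lt x e : 0 < e -> N x < e ^+ 2 -> nm x < e.
Proof.
move=> ep h; rewrite -(ltr_pXn2r (n:=2)) ?nnegrE ?nm_ge0 ?ltW //.
by rewrite nm_sqr.
Qed.
Lemma nm_mulle x a b : 0 <= b -> nm x < a / (b + 1) -> nm x * b <= a.
Proof.
move=> b0 h.
have b1 : 0 < b + 1 by lra.
rewrite ltr_pdivlMr // in h.
have := nm_ge0 x; nra.
Qed.

Lemma lemmaG (D : set V) (L : V -> V) (f : V -> R[i]) (M : R) :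
  D 0 -> (forall a x y, D x -> D y -> D (a *: x + y)) ->
  (forall a x y, D x -> D y -> L (a *: x + y) = a *: L x + L y) ->
  (forall a x y, D x -> D y -> f (a *: x + y) = a * f x + f y) ->
  (forall x, D x -> complex.Re (f x) <= M * nm (L x)) ->
  exists g, exists u : nat -> V,
    [/\ forall n, D (u n), hcauchy ip (fun n => L (u n)),
        hcvg ip (fun n => L (u n)) g
      & forall p, D p -> ip (L p) g = f p].
Proof.
move=> D0 Dl Ll fl fb.
have DZ a x : D x -> D (a *: x) by move=> Dx; rewrite -[a *: x]addr0; exact: Dl.
have L0 : L 0 = 0.
  have := Ll 1 0 0 D0 D0; rewrite !scale1r addr0 => h.
  have := congr1 (fun z => z - L 0) h; rewrite /= subrr addrK => h'.
  by rewrite -h'.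
have f0 : f 0 = 0.
  have := fl 1 0 0 D0 D0; rewrite !scale1r addr0 mul1r => h.
  have := congr1 (fun z => z - f 0) h; rewrite /= subrr addrK => h'.
  by rewrite -h'.
have LZ a x : D x -> L (a *: x) = a *: L x.
  by move=> Dx; rewrite -[a *: x]addr0 Ll // L0 addr0.
have fZ a x : D x -> f (a *: x) = a * f x.
  by move=> Dx; rewrite -[a *: x]addr0 fl // f0 addr0.
pose J x := N (L x) - 2 * complex.Re (f x).
have Jlb x : D x -> - M ^+ 2 <= J x.
  move=> Dx; rewrite /J -nm_sqr; have := fb x Dx.
  have := sqr_ge0 (nm (L x) - M); nra.
pose E := [set J x | x in D].
have hinf : has_inf E.
  split; first by exists (J 0), 0.
  by exists (- M ^+ 2) => _ [x Dx <-]; exact: Jlb.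
pose d := inf E.
have dle x : D x -> d <= J x.
  by move=> Dx; apply: (ge_inf hinf.2); exists x.
have hseq : forall n : nat, exists x, D x /\ J x < d + inv1 R n.
  move=> n; have [_ [x Dx <-] h] := inf_adherent (inv1_gt0 R n) hinf.
  by exists x.
have [u hu] := choice hseq.
clearbody d.
have Du n : D (u n) by case: (hu n).
have par x y : D x -> D y -> N (L x - L y) <= 2 * J x + 2 * J y - 4 * d.
  move=> Dx Dy.
  pose h := ((2^-1 : R)%:C)%C.
  have Dm : D (h *: x + h *: y) by apply: Dl => //; exact: DZ.
  have := dle _ Dm.
  rewrite /J (Ll _ _ _ Dx (DZ h y Dy)) (LZ h y Dy).
  rewrite (fl _ _ _ Dx (DZ h y Dy)) (fZ h y Dy).
  rewrite -scalerDr N_scale.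
  have := parallelogram (L x) (L y).
  rewrite ReD !ReM /= expr2 => h1 h2.
  lra.
have cau : hcauchy ip (fun n => L (u n)).
  move=> e ep.
  have e2 : 0 < e ^+ 2 / 4 by apply: divr_gt0 => //; apply: exprn_gt0.
  have [K hK] := small_inv e2.
  exists K => m n hm hn; apply: nm_lt => //.
  have := par _ _ (Du m) (Du n).
  have := hK _ hm; have := hK _ hn.
  case: (hu m) => _ hm'; case: (hu n) => _ hn' h1 h2 h3.
  move: hm' hn' h3; generalize (J (u m)) (J (u n)) => a b ha hb h3; lra.
have [g hg] : exists g, hcvg ip (fun n => L (u n)) g.
  by case: HH => _ _ _ _ C; exact: C.
exists g, u; split => //.
have var p : D p -> complex.Re (ip g (L p)) = complex.Re (f p).
  move=> Dp.
  set al := complex.Re (ip g (L p)) - complex.Re (f p).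
  set be := N (L p).
  suff : al = 0 by rewrite /al; lra.
  apply: (quad0 (N_ge0 (L p))) => t.
  rewrite -oppr_le0.
  apply: (le0_eps (K := 1 + 2 * `|t|)) => e ep.
  have [K1 hK1] := small_inv ep.
  have ep' : 0 < e / (nm (L p) + 1).
    by apply: divr_gt0 => //; have := nm_ge0 (L p); lra.
  have [K2 hK2] := hg _ ep'.
  pose n := maxn K1 K2.
  have h1 := hK1 n (leq_maxl _ _).
  have h2 := nm_mulle (nm_ge0 (L p)) (hK2 n (leq_maxr _ _)).
  have h3 := CS (L (u n) - g) (L p).
  have Dv : D ((t%:C)%C *: p + u n) by apply: Dl.
  have := dle _ Dv.
  rewrite /J Ll // fl // (addrC (_ *: L p)) N_add_real ReD ReM /=.
  case: (hu n) => _ hn.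
  rewrite ipBl ReB in h3.
  have : `| t * (complex.Re (ip (L (u n)) (L p)) - complex.Re (ip g (L p)))| <= `|t| * e.
    rewrite normrM ler_wpM2l //; apply: le_trans h3 _.
    by [].
  rewrite ler_norml => /andP[h4 h5] h6.
  have := normr_ge0 t.
  move: hn; rewrite /J /al /be => hn h7.
  lra.
move=> p Dp.
have h1 := var p Dp.
have h2 := var _ (DZ 'i%C p Dp).
rewrite LZ // fZ // ipZr ReM ReM /= in h2.
rewrite ip_conj; apply: cext; rewrite ?ReJ ?ImJ.
  done.
rewrite !mul0r !sub0r mulN1r mul1r opprK in h2.
by rewrite h2 opprK.
Qed.

Lemma dense_orth (D : set V) z : dense ip D -> (forall u, D u -> ip u z = 0) -> z = 0.
Proof.
move=> dD h; apply: N_eq0; apply/eqP; rewrite eq_le N_ge0 andbT.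
apply: (le0_eps (K := nm z)) => e ep.
have [u Du hu] := dD z e ep.
have -> : N z = complex.Re (ip (z - u) z) by rewrite ipBl (h u Du) subr0.
apply: le_trans (CSr _ _) _.
by rewrite ler_wpM2r ?nm_ge0 // ltW.
Qed.

Lemma adj_char (S T : op V) v w : is_adjoint ip S T -> dense ip (dom T) ->
  (forall u, dom T u -> ip (app T u) v = ip u w) -> dom S v /\ app S v = w.
Proof.
case=> hd hr dT h.
have Dv : dom S v by rewrite hd; exists w.
split => //; apply/eqP; rewrite -subr_eq0; apply/eqP.
apply: (dense_orth dT) => u Du.
by rewrite ipBr -hr // h // subrr.
Qed.

Lemma coer (D : set V) (A : V -> V) (y h : V) (c mu : R) : dense ip D -> 0 < mu -> 0 <= c ->
  (forall p, D p -> nm (A p) <= c * nm p) ->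
  (forall p, D p -> 2 * mu * N p <= complex.Re (ip (A p) p)) ->
  (forall p, D p -> ip (A p) y = ip p h) -> ip y h = 0 -> y = 0.
Proof.
move=> dD mup c0 hA hC hy yh.
apply: nm_eq0; apply: (coerR mup c0 (nm_ge0 h) (nm_ge0 y)) => e ep.
have [p Dp hp] := dD y e ep.
exists (nm p); split; first exact: nm_ge0.
  have := nm_triangle p (y - p); rewrite addrC subrK => h1.
  lra.
rewrite nm_sqr.
apply: le_trans (hC p Dp) _.
have e1 : ip (A p) p = ip y h - ip (y - p) h - ip (A p) (y - p).
  rewrite ipBr (hy p Dp) ipBl; ring.
rewrite e1 yh sub0r ReB ReN.
have h1 := CS (y - p) h.
have h2 := CS (A p) (y - p).
rewrite ler_norml in h1; rewrite ler_norml in h2.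
case/andP: h1 => h1 _; case/andP: h2 => h2 _.
have h3 : nm (y - p) * nm h <= e * nm h by rewrite ler_wpM2r ?nm_ge0 // ltW.
have h4 : nm (A p) * nm (y - p) <= c * nm p * e.
  apply: le_trans (_ : c * nm p * nm (y - p) <= _).
    by rewrite ler_wpM2r ?nm_ge0 // hA.
  by rewrite ler_wpM2l ?mulr_ge0 ?nm_ge0 // ltW.
lra.
Qed.

Lemma main (T0 Tt0 T1 Tt1 : op V) :
  joint_closed_friedrichs ip T0 Tt0 ->
  is_adjoint ip T1 Tt0 ->
  is_adjoint ip Tt1 T0 ->
  bperp ip T1 Tt1 (bperp ip T1 Tt1 (sum3 (dom T0) (ker T1) (ker Tt1))) = dom T1.
Proof.
move=> [[[[linT0 dT0] [linTt0 dTt0]] Edom Hsym [c cp Hc] [mu mup Hmu]] clT0 _] A1 A2.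
case: linT0 => D00 Dl0 Ll0.
have DT p : dom T0 p -> dom Tt0 p by rewrite Edom.
have hT0T1 w : dom T0 w -> dom T1 w /\ app T1 w = app T0 w.
  move=> Dw; apply: (adj_char A1 dTt0) => u Du.
  rewrite (ip_conj w (app Tt0 u)) -Hsym; [by rewrite -ip_conj | done | by rewrite Edom].
have hTt0Tt1 v : dom T0 v -> dom Tt1 v /\ app Tt1 v = app Tt0 v.
  by move=> Dv; apply: (adj_char A2 dT0) => u Du; rewrite Hsym.
have k1 : ker T1 0.
  by apply: (adj_char A1 dTt0) => u Du; rewrite !ip0r.
have k2 : ker Tt1 0.
  by apply: (adj_char A2 dT0) => u Du; rewrite !ip0r.
have m2 x : ker Tt1 x -> sum3 (dom T0) (ker T1) (ker Tt1) x.
  by move=> hx; exists 0, 0, x; split => //; rewrite !add0r.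
have m1 x : ker T1 x -> sum3 (dom T0) (ker T1) (ker Tt1) x.
  by move=> hx; exists 0, x, 0; split => //; rewrite add0r addr0.
have hcoer p : dom T0 p -> 2 * mu * N p <= complex.Re (ip (app T0 p + app Tt0 p) p).
  move=> Dp; have := Hmu p Dp; rewrite lecE => /andP[_ /= h].
  by rewrite -nm_sqr.
have LB p : dom T0 p -> mu * nm p <= nm (app T0 p).
  move=> Dp; have := hcoer p Dp.
  rewrite ipDl ReD (ReipC p (app Tt0 p)) -(Hsym p p Dp Dp) -nm_sqr => h.
  have h2 := CSr (app T0 p) p.
  have [s0|sp] := eqVneq (nm p) 0.
    by rewrite s0 mulr0 nm_ge0.
  have spos : 0 < nm p by rewrite lt_def sp nm_ge0.
  have : nm p * (mu * nm p - nm (app T0 p)) <= 0.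
    have -> : nm p * (mu * nm p - nm (app T0 p)) = mu * nm p ^+ 2 - nm (app T0 p) * nm p by ring.
    lra.
  by rewrite pmulr_rle0 //; lra.
rewrite eqEsubset; split => [u [] // | u Du].
split => // v [Dv Hv].
have Wv : dom T0 v.
  pose z := app T1 v.
  have zk k : ker Tt1 k -> ip z k = 0.
    move=> hk; have := Hv k (m2 k hk); rewrite /bform hk.2 ip0r subr0 => ->.
    done.
  have hb x : dom T0 x -> complex.Re (ip (app T0 x) z) <= nm z * nm (app T0 x).
    by move=> Dx; rewrite mulrC; exact: CSr.
  have [g [wn [Dwn cauT hgT hgo]]] := lemmaG (L := app T0) (f := fun w => ip (app T0 w) z)
     (M := nm z) D00 Dl0 Ll0
     (fun a x y Dx Dy => etrans (congr1 (ip^~ z) (Ll0 a x y Dx Dy)) (ip_lin _ _ _ _))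
     hb.
  have cauw : hcauchy ip wn.
    move=> e ep.
    have [K hK] := cauT (mu * e) (mulr_gt0 mup ep).
    exists K => m n hm hn.
    have Dd : dom T0 ((-1) *: wn n + wn m) by apply: Dl0.
    have := LB _ Dd; rewrite Ll0 // !scaleN1r (addrC (- wn n)) (addrC (- app T0 (wn n))) => h1.
    have := hK m n hm hn => h2.
    have : mu * nm (wn m - wn n) < mu * e by lra.
    by rewrite ltr_pM2l.
  have [w hw] : exists w, hcvg ip wn w.
    by case: HH => _ _ _ _ C; exact: C.
  have [Dw Tw] := clT0 wn w g Dwn hw hgT.
  pose r := z - g.
  have hr p : dom T0 p -> ip (app T0 p) r = ip p 0.
    by move=> Dp; rewrite ipBr hgo // subrr ip0r.
  have [Dr Tr] := adj_char A2 dT0 hr.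
  have zr : ip z r = 0 by apply: zk.
  have gr : ip g r = 0 by rewrite -Tw hr // ip0r.
  have r0 : r = 0 by apply: ip_eq0; rewrite /r ipBl -/r zr gr subrr.
  have hzw : app T1 v = app T0 w.
    by rewrite Tw; apply/eqP; rewrite -subr_eq0; apply/eqP.
  pose y := v - w.
  have hy : ker T1 y.
    apply: (adj_char A1 dTt0) => q Dq.
    rewrite ipBr (A1.2 v q Dv Dq) (A1.2 w q (hT0T1 w Dw).1 Dq) (hT0T1 w Dw).2 hzw.
    by rewrite subrr ip0r.
  have Tty p : dom T0 p -> ip (app Tt0 p) y = 0.
    by move=> Dp; rewrite (A1.2 y p hy.1 (DT p Dp)) hy.2 ip0r.
  have hb' p : dom T0 p -> complex.Re (ip (app T0 p) y) <= c * nm y * nm (id p).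
    move=> Dp /=.
    have -> : ip (app T0 p) y = ip (app T0 p + app Tt0 p) y by rewrite ipDl Tty // addr0.
    apply: le_trans (CSr _ _) _.
    rewrite mulrAC ler_wpM2r ?nm_ge0 //; exact: Hc.
  have [g' [_ [_ _ _ hg'o]]] := lemmaG (L := id) (f := fun p => ip (app T0 p) y)
     (M := c * nm y) D00 Dl0 (fun a x1 x2 _ _ => erefl)
     (fun a x1 x2 Dx Dy => etrans (congr1 (ip^~ y) (Ll0 a x1 x2 Dx Dy)) (ip_lin _ _ _ _))
     hb'.
  have Dy1 : dom Tt1 y.
    by rewrite A2.1; exists g' => p Dp; rewrite -hg'o.
  pose h := app Tt1 y.
  have hyh p : dom T0 p -> ip (app T0 p) y = ip p h.
    by move=> Dp; apply: A2.2.
  have yh : ip y h = 0.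
    have := Hv y (m1 y hy); rewrite /bform -/z -/h => e1.
    rewrite ipBl -(hyh w Dw) -hzw.
    by apply/eqP; rewrite -oppr_eq0 opprB -/z e1.
  have y0 : y = 0.
    apply: (coer (D := dom T0) (A := fun p => app T0 p + app Tt0 p) (h := h) (c := c) (mu := mu)) => //.
    - exact: ltW.
    - by move=> p Dp; rewrite ipDl Tty // addr0 hyh.
  by move/eqP: y0; rewrite subr_eq0 => /eqP ->.
rewrite /bform (hTt0Tt1 v Wv).2 (ip_conj (app Tt0 v) u) (A1.2 u v Du (DT v Wv)) -ip_conj.
by rewrite subrr.
Qed.

End Hil.

Unset Implicit Arguments.

Theorem lemma3p7 (R : realType) (V : lmodType R[i]) (ip : V -> V -> R[i])
  (T0 Tt0 T1 Tt1 : op V) :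
  is_hilbert ip ->
  joint_closed_friedrichs ip T0 Tt0 ->
  is_adjoint ip T1 Tt0 ->
  is_adjoint ip Tt1 T0 ->
  bperp ip T1 Tt1
    (bperp ip T1 Tt1 (sum3 (dom T0) (ker T1) (ker Tt1))) = dom T1.
Proof.
move=> HH; exact: main.
Qed.
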